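(* Let $n$ be even and let $v_0,\dots,v_{n+1}\in\mathbb{R}^n$ be hereditarily spanning. Then $dS(v_0,\dots,v_{n+1})=0$.
   Context: $\mathrm{Or}(v_1,\dots,v_n)=\operatorname{sign}\det(v_1,\dots,v_n)$ (zero if not a basis). Define $S:(\mathbb{R}^n)^{n+1}\to\{-1,0,1\}$ by $S(v_0,\dots,v_n)=0$ if $0$ is not in the interior of the convex hull of $v_0,\dots,v_n$, and otherwise $S(v_0,\dots,v_n)=(-1)^i\mathrm{Or}(v_0,\dots,\widehat{v_i},\dots,v_n)$ for any $i\in\{0,\dots,n\}$ (this is independent of $i$). A $k$-tuple ($k\ge n$) in $\mathbb{R}^n$ is hereditarily spanning if every $n$ of its elements span $\mathbb{R}^n$. $dS(v_0,\dots,v_{n+1})=\sum_{i=0}^{n+1}(-1)^iS(v_0,\dots,\widehat{v_i},\dots,v_{n+1})$. *)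

(* Defs.v *)
From HB Require Import structures.
From mathcomp Require Import all_boot all_order all_algebra.
From Stdlib Require Import ClassicalEpsilon.
Set Implicit Arguments. Unset Strict Implicit. Unset Printing Implicit Defensive.
Import Order.TTheory GRing.Theory Num.Theory.
Local Open Scope ring_scope.

Definition Or (R : realFieldType) (n : nat) (v : 'I_n -> 'rV[R]_n) : R :=
  Num.sg (\det (\matrix_(i < n, j < n) v i 0 j)).

Definition in_conv_hull (R : realFieldType) (n k : nat)
    (v : 'I_k -> 'rV[R]_n) (x : 'rV[R]_n) : Prop :=
  exists w : 'I_k -> R,
    [/\ forall i, 0 <= w i, \sum_(i < k) w i = 1 & x = \sum_(i < k) w i *: v i].

(* 0 is in the interior (standard topology of R^n, given by the max norm)
   of the convex hull of v_0, ..., v_{k-1}. *)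
Definition zero_in_interior_conv (R : realFieldType) (n k : nat)
    (v : 'I_k -> 'rV[R]_n) : Prop :=
  exists2 eps : R, 0 < eps &
    forall x : 'rV[R]_n, (forall j, `|x 0 j| < eps) -> in_conv_hull v x.

(* S(v_0,...,v_n) : 0 if 0 is not in the interior of the convex hull,
   otherwise (-1)^i Or(v_0,..,^v_i,..,v_n) with the choice i = 0. *)
Definition Sgn (R : realFieldType) (n : nat) (v : 'I_n.+1 -> 'rV[R]_n) : R :=
  if excluded_middle_informative (zero_in_interior_conv v) then Or (fun j => v (lift ord0 j)) else 0.

Definition dS (R : realFieldType) (n : nat) (v : 'I_n.+2 -> 'rV[R]_n) : R :=
  \sum_(i < n.+2) (-1) ^+ i * Sgn (fun j => v (lift i j)).

Definition hereditarily_spanning (R : realFieldType) (n k : nat)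
    (v : 'I_k -> 'rV[R]_n) : Prop :=
  forall f : 'I_n -> 'I_k, injective f ->
    row_full (\matrix_(i < n, j < n) v (f i) 0 j).

(* Main.v *)
Require Import Defs.
From HB Require Import structures.
From mathcomp Require Import all_boot all_order all_algebra ring lra zify.
From Stdlib Require Import ClassicalEpsilon.
Import Order.TTheory GRing.Theory Num.Theory.
Local Open Scope ring_scope.
Set Implicit Arguments. Unset Strict Implicit.

Definition mat (R : realFieldType) (n : nat) (u : 'I_n -> 'rV[R]_n) : 'M[R]_n :=
  \matrix_(i < n, j < n) u i 0 j.

Lemma indep (R : realFieldType) (n : nat) (u : 'I_n -> 'rV[R]_n) (a : 'I_n -> R) :
  \det (mat u) != 0 -> \sum_j a j *: u j = 0 -> forall j, a j = 0.
Proof.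
move=> hd hs j.
have hu : mat u \in unitmx by rewrite unitmxE unitfE.
set A := \row_j a j : 'rV[R]_n.
have hA : A *m mat u = 0.
  rewrite mulmx_sum_row -[RHS]hs; apply: eq_bigr => k _.
  rewrite mxE; congr (_ *: _); apply/rowP => l; rewrite !mxE.
  by [].
have : A = 0 by rewrite -(mulmxK hu A) hA mul0mx.
by move/rowP/(_ j); rewrite !mxE.
Qed.

Definition cr (R : realFieldType) (n : nat) (w : 'I_n.+1 -> 'rV[R]_n) (k : 'I_n.+1) : R :=
  (-1) ^+ k * \det (mat (fun r => w (lift k r))).

Lemma cramer (R : realFieldType) (n : nat) (w : 'I_n.+1 -> 'rV[R]_n) :
  \sum_k cr w k *: w k = 0.
Proof.
apply/rowP => j0; rewrite summxE mxE.
pose B : 'M[R]_n.+1 := \matrix_(r, c) w r 0 (oapp id j0 (unlift ord0 c)).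
have hB : \det B = 0.
  rewrite -det_tr; apply: (@determinant_alternate _ _ _ ord0 (lift ord0 j0)).
    by rewrite neq_lift.
  by move=> c; rewrite !mxE unlift_none liftK.
transitivity (\det B); last by []. rewrite (expand_det_col B ord0); apply: eq_bigr => r _.
rewrite mxE /cofactor /cr addn0 !mxE unlift_none /= mulrC; congr (_ * _).
congr (_ * \det _); apply/matrixP => i j; rewrite !mxE liftK //.
Qed.

Lemma ker1 (R : realFieldType) (n : nat) (w : 'I_n.+1 -> 'rV[R]_n) (c d : 'I_n.+1 -> R) :
  \det (mat (fun r => w (lift ord0 r))) != 0 ->
  \sum_k c k *: w k = 0 -> \sum_k d k *: w k = 0 -> d ord0 != 0 ->
  forall k, c k = c ord0 / d ord0 * d k.
Proof.
move=> hdet hc hd hd0.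
set al := c ord0 / d ord0.
have he : \sum_k (c k - al * d k) *: w k = 0.
  under eq_bigr => k _ do rewrite scalerBl -scalerA.
  by rewrite sumrB -scaler_sumr hc hd scaler0 subr0.
rewrite big_ord_recl in he.
have h0 : c ord0 - al * d ord0 = 0 by rewrite /al divfK // subrr.
rewrite h0 scale0r add0r in he.
have := indep hdet he => hl k.
case: (unliftP ord0 k) => [j ->|->]; last by rewrite /al divfK.
by apply/eqP; rewrite -subr_eq0; apply/eqP/hl.
Qed.

Lemma cr_neq0 (R : realFieldType) (n : nat) (w : 'I_n.+1 -> 'rV[R]_n) k :
  \det (mat (fun r => w (lift k r))) != 0 -> cr w k != 0.
Proof. by move=> h; rewrite /cr mulf_neq0 // signr_eq0. Qed.

Lemma pos_iff_sign (R : realFieldType) (n : nat) (w : 'I_n.+1 -> 'rV[R]_n) :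
  (forall k, \det (mat (fun r => w (lift k r))) != 0) ->
  (exists l : 'I_n.+1 -> R, (forall k, 0 < l k) /\ \sum_k l k *: w k = 0) <->
  (forall k, Num.sg (cr w k) = Num.sg (cr w ord0)).
Proof.
move=> hdet; split.
  case=> l [lp hl] k.
  have hk := ker1 (hdet ord0) hl (cramer w) (cr_neq0 (hdet ord0)).
  have h1 := lp k; rewrite hk in h1.
  have h2 := lp ord0; rewrite hk in h2.
  set a := l ord0 / cr w ord0 in h1 h2.
  have : Num.sg (a * cr w k) = Num.sg (a * cr w ord0) by rewrite !gtr0_sg.
  rewrite [LHS]sgrM [RHS]sgrM => /mulfI; apply.
  by rewrite sgr_eq0; apply: contraTneq h2 => ->; rewrite mul0r ltxx.
move=> hs; exists (fun k => Num.sg (cr w ord0) * cr w k); split.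
  by move=> k; rewrite -(hs k) -normrEsg normr_gt0 cr_neq0.
under eq_bigr => k _ do rewrite -scalerA.
by rewrite -scaler_sumr cramer scaler0.
Qed.

Lemma sum_ge_term (R : realFieldType) (m : nat) (F : 'I_m -> R) j :
  (forall k, 0 <= F k) -> F j <= \sum_k F k.
Proof. by move=> h; rewrite (bigD1 j) //= lerDl sumr_ge0. Qed.

Lemma interior_of_pos (R : realFieldType) (n : nat) (w : 'I_n.+1 -> 'rV[R]_n)
    (l : 'I_n.+1 -> R) :
  \det (mat (fun r => w (lift ord0 r))) != 0 ->
  (forall k, 0 < l k) -> \sum_k l k *: w k = 0 -> zero_in_interior_conv w.
Proof.
move=> hdet lp hl.
set s := \sum_k l k.
have sp : 0 < s by rewrite /s big_ord_recl; apply: ltr_pwDl (lp _) (sumr_ge0 _ _) => k _; exact/ltW.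
pose nu k := l k / s.
have nup k : 0 < nu k by rewrite divr_gt0.
have nus : \sum_k nu k = 1 by rewrite -mulr_suml divff // gt_eqF.
have nuw : \sum_k nu k *: w k = 0.
  under eq_bigr => k _ do rewrite /nu mulrC -scalerA.
  by rewrite -scaler_sumr hl scaler0.
have nu1 k : nu k <= 1 by rewrite -nus; apply: sum_ge_term => j; exact/ltW.
set M := mat (fun r => w (lift ord0 r)).
have hu : M \in unitmx by rewrite unitmxE unitfE.
set N := invmx M.
set K0 := \sum_(j < n) \sum_(i < n) `|N i j|.
have K0p : 0 <= K0 by apply: sumr_ge0 => j _; apply: sumr_ge0.
have K1p : 0 < K0 + 1 by apply: ltr_wpDl K0p ltr01.
set Q := \sum_k (nu k)^-1.
have Qk k : (nu k)^-1 <= Q by apply: sum_ge_term => j; rewrite invr_ge0 ltW.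
have Qp : 0 < Q by apply: lt_le_trans (Qk ord0); rewrite invr_gt0.
have nuQ k : Q^-1 <= nu k.
  by rewrite -[nu k]invrK lef_pV2 ?Qk // posrE ?invr_gt0.
have Q1 : Q^-1 <= 1 by apply: le_trans (nuQ ord0) (nu1 ord0).
exists (4 * Q * (K0 + 1))^-1.
  by rewrite invr_gt0 !mulr_gt0.
move=> x hx.
set a := x *m N.
set T := \sum_j `|a 0 j|.
have aj j : `|a 0 j| <= (4 * Q * (K0 + 1))^-1 * \sum_(i < n) `|N i j|.
  rewrite /a mxE mulr_sumr; apply: le_trans (ler_norm_sum _ _ _) _.
  apply: ler_sum => i _; rewrite normrM ler_wpM2r //; exact/ltW.
have hT : T <= Q^-1 / 4.
  apply: le_trans (_ : \sum_j (4 * Q * (K0 + 1))^-1 * \sum_(i < n) `|N i j| <= _).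
    exact: ler_sum.
  rewrite -mulr_sumr -/K0.
  have -> : Q^-1 / 4 = (4 * Q * (K0 + 1))^-1 * (K0 + 1).
    by field; rewrite ?gt_eqF.
  by rewrite ler_wpM2l ?lerDl // invr_ge0 !mulr_ge0 // ?ltW // addr_ge0.
have Tj j : `|a 0 j| <= T by apply: sum_ge_term.
have sa : \sum_j a 0 j <= T by apply: le_trans (ler_norm _) _; apply: ler_norm_sum.
set t := 1 - \sum_j a 0 j.
have ht : 3/4 <= t.
  rewrite /t; have := le_trans sa hT; lra.
pose mu k := t * nu k + oapp (fun j => a 0 j) 0 (unlift ord0 k).
exists mu; split.
- move=> k; rewrite /mu; case: (unliftP ord0 k) => [j ->|->] /=.
    have h1 := nuQ (lift ord0 j); have h2 := nup (lift ord0 j).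
    have := Tj j; rewrite ler_norml => /andP [h3 _].
    have h4 := le_trans sa hT; nra.
  rewrite addr0; apply: mulr_ge0; [lra | exact/ltW].
- rewrite /mu big_split /= -mulr_sumr nus mulr1 big_ord_recl unlift_none /=.
  under eq_bigr => j _ do rewrite liftK /=.
  by rewrite /t add0r subrK.
- rewrite /mu.
  under eq_bigr => k _ do rewrite scalerDl -scalerA.
  rewrite big_split /= -scaler_sumr nuw scaler0 add0r big_ord_recl unlift_none scale0r add0r.
  under eq_bigr => j _ do rewrite liftK /=.
  rewrite -[LHS](mulmxKV hu x) -/N -/a mulmx_sum_row; apply: eq_bigr => j _.
  congr (_ *: _); apply/rowP => i; rewrite !mxE.
  by [].
Qed.

Lemma pos_of_interior (R : realFieldType) (n : nat) (w : 'I_n.+1 -> 'rV[R]_n) :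
  (forall k, \det (mat (fun r => w (lift k r))) != 0) ->
  zero_in_interior_conv w ->
  exists l : 'I_n.+1 -> R, (forall k, 0 < l k) /\ \sum_k l k *: w k = 0.
Proof.
move=> hdet [eps ep H].
have [l [l0 ls hx]] : in_conv_hull w 0 by apply: H => j; rewrite mxE normr0.
exists l; split=> //.
have hk := ker1 (hdet ord0) (esym hx) (cramer w) (cr_neq0 (hdet ord0)).
move=> k; rewrite lt_def l0 andbT.
set a := l ord0 / cr w ord0 in hk.
have an : a != 0.
  apply: contra_eq_neq ls => a0.
  by rewrite big1 => [|j _]; [rewrite eq_sym oner_neq0 | rewrite hk a0 mul0r].
by rewrite hk mulf_neq0 // cr_neq0.
Qed.

Lemma hs_det (R : realFieldType) (n : nat) (v : 'I_n.+2 -> 'rV[R]_n) (f : 'I_n -> 'I_n.+2) :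
  hereditarily_spanning v -> injective f -> \det (mat (fun r => v (f r))) != 0.
Proof. by move=> hs fi; rewrite -unitfE -unitmxE -row_full_unit; exact: hs. Qed.

Lemma split_sum (R : realFieldType) (N n : nat) (v : 'I_N.+1 -> 'rV[R]_n) (g : 'I_N.+1 -> R) i :
  \sum_k g k *: v k = g i *: v i + \sum_(r < N) g (lift i r) *: v (lift i r).
Proof. by rewrite (bigD1_ord i). Qed.

Lemma lin2 (R : realFieldType) (N n : nat) (v : 'I_N -> 'rV[R]_n) (c d : 'I_N -> R) a :
  \sum_k c k *: v k = 0 -> \sum_k d k *: v k = 0 -> \sum_k (c k + a * d k) *: v k = 0.
Proof.
move=> hc hd; under eq_bigr => k _ do rewrite scalerDl -scalerA.
by rewrite big_split /= -scaler_sumr hc hd scaler0 addr0.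
Qed.

Lemma Zlem (R : realFieldType) (n : nat) (v : 'I_n.+2 -> 'rV[R]_n) (c : 'I_n.+2 -> R) i k :
  hereditarily_spanning v -> \sum_m c m *: v m = 0 -> i != k -> c i = 0 -> c k = 0 ->
  forall m, c m = 0.
Proof.
move=> hs hc ik ci ck.
have [k' hk _] := unlift_some ik.
rewrite (split_sum _ _ i) ci scale0r add0r (split_sum _ _ k') -hk ck scale0r add0r in hc.
have hf : injective (fun r => lift i (lift k' r)) by move=> a b /lift_inj /lift_inj.
have := indep (hs_det hs hf) hc => h0 m.
case: (unliftP i m) => [m' ->|->] //.
case: (unliftP k' m') => [r ->|->]; [exact: h0 | by rewrite -hk].
Qed.

Definition posi (R : realFieldType) (n : nat) (v : 'I_n.+2 -> 'rV[R]_n) (i : 'I_n.+2) :=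
  exists g : 'I_n.+2 -> R,
    [/\ g i = 0, forall j, j != i -> 0 < g j & \sum_k g k *: v k = 0].

Lemma hdet_w (R : realFieldType) (n : nat) (v : 'I_n.+2 -> 'rV[R]_n) i :
  hereditarily_spanning v -> forall k, \det (mat (fun r => v (lift i (lift k r)))) != 0.
Proof. by move=> hs k; apply: hs_det => // a b /lift_inj /lift_inj. Qed.

Lemma posi_equiv (R : realFieldType) (n : nat) (v : 'I_n.+2 -> 'rV[R]_n) i :
  hereditarily_spanning v ->
  zero_in_interior_conv (fun j => v (lift i j)) <-> posi v i.
Proof.
move=> hs; split.
  move/(pos_of_interior (hdet_w i hs)) => [l [lp hl]].
  exists (fun m => oapp l 0 (unlift i m)); split.
  - by rewrite unlift_none.
  - by move=> j; case: (unliftP i j) => [j' _|->] /=; [move=> _; exact: lp | rewrite eqxx].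
  - rewrite (split_sum _ _ i) unlift_none scale0r add0r -[RHS]hl.
    by apply: eq_bigr => r _; rewrite liftK.
case=> g [gi gp hg].
apply: (@interior_of_pos _ _ _ (fun r => g (lift i r))) (hdet_w i hs ord0) _ _.
  by move=> r; apply: gp; rewrite eq_sym neq_lift.
by rewrite (split_sum _ _ i) gi scale0r add0r in hg.
Qed.

Lemma Sgn_pos (R : realFieldType) (n : nat) (v : 'I_n.+2 -> 'rV[R]_n) i :
  hereditarily_spanning v -> posi v i ->
  Sgn (fun j => v (lift i j)) = Num.sg (cr (fun j => v (lift i j)) ord0).
Proof.
move=> hs hp; rewrite /Sgn; case: excluded_middle_informative => h.
  by rewrite /Or /cr expr0 mul1r.
by case: h; apply/(posi_equiv i hs).
Qed.

Lemma Sgn_npos (R : realFieldType) (n : nat) (v : 'I_n.+2 -> 'rV[R]_n) i :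
  hereditarily_spanning v -> ~ posi v i -> Sgn (fun j => v (lift i j)) = 0.
Proof.
move=> hs hp; rewrite /Sgn; case: excluded_middle_informative => h //.
by case: hp; apply/(posi_equiv i hs).
Qed.

Lemma posi_sign (R : realFieldType) (n : nat) (v : 'I_n.+2 -> 'rV[R]_n) i :
  hereditarily_spanning v -> posi v i ->
  forall k, Num.sg (cr (fun j => v (lift i j)) k) = Num.sg (cr (fun j => v (lift i j)) ord0).
Proof.
move=> hs hp; apply/(pos_iff_sign (hdet_w i hs)).
case: hp => g [gi gp hg]; exists (fun r => g (lift i r)); split.
  by move=> r; apply: gp; rewrite eq_sym neq_lift.
by rewrite (split_sum _ _ i) gi scale0r add0r in hg.
Qed.

Lemma partner (R : realFieldType) (n : nat) (v : 'I_n.+2 -> 'rV[R]_n) i :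
  hereditarily_spanning v -> posi v i -> exists2 k, k != i & posi v k.
Proof.
move=> hs [g [gi gp hg]].
set j := lift i ord0.
have ji : j != i by rewrite eq_sym neq_lift.
pose F m := oapp (cr (fun r => v (lift j r))) 0 (unlift j m).
have hF : \sum_m F m *: v m = 0.
  rewrite (split_sum _ _ j) /F unlift_none scale0r add0r -[RHS](cramer (fun r => v (lift j r))).
  by apply: eq_bigr => r _; rewrite liftK.
have Fi : F i != 0.
  have [i' -> _] := unlift_some ji.
  by rewrite /F liftK /=; apply: cr_neq0; apply: hdet_w.
pose f m := F m / F i.
have hf : \sum_m f m *: v m = 0.
  under eq_bigr => m _ do rewrite /f mulrC -scalerA.
  by rewrite -scaler_sumr hF scaler0.
have fi : f i = 1 by rewrite /f divff.
pose P := fun m : 'I_n.+2 => m != i.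
case: (@arg_maxP _ R _ j P (fun m => - f m / g m) ji) => k Pk hk.
pose t := - f k / g k.
pose h m := f m + t * g m.
have hh : \sum_m h m *: v m = 0 by apply: lin2.
have hi : h i = 1 by rewrite /h gi mulr0 addr0.
have gk : 0 < g k by apply: gp.
have hk0 : h k = 0 by rewrite /h /t divfK ?gt_eqF // addrN.
have hge m : m != i -> 0 <= h m.
  move=> mi; have := hk m mi; rewrite /h -/t => le.
  have gm : 0 < g m by apply: gp.
  have := ler_wpM2r (ltW gm) le; rewrite divfK ?gt_eqF // => h1.
  lra.
exists k => //; exists h; split => // m mk.
have [->|mi] := eqVneq m i; first by rewrite hi ltr01.
rewrite lt_def hge // andbT.
apply/eqP => hm0.
have := Zlem hs hh mk hm0 hk0 i; rewrite hi => /eqP; rewrite oner_eq0.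
by [].
Qed.

Lemma uniq3 (R : realFieldType) (n : nat) (v : 'I_n.+2 -> 'rV[R]_n) i k m :
  hereditarily_spanning v -> posi v i -> posi v k -> i != k -> posi v m -> m = i \/ m = k.
Proof.
move=> hs [g [gi gp hg]] [d [dk dp hd]] ik [e [em ep he]].
have [->|mi] := eqVneq m i; first by left.
have [->|mk] := eqVneq m k; first by right.
exfalso.
have di : 0 < d i by apply: dp.
have gk : 0 < g k by apply: gp; rewrite eq_sym.
have ei : 0 < e i by apply: ep; rewrite eq_sym.
have ek : 0 < e k by apply: ep; rewrite eq_sym.
pose al := e i / d i. pose be := e k / g k.
pose e' x := (e x + (- al) * d x) + (- be) * g x.
have he' : \sum_x e' x *: v x = 0 by apply: lin2 => //; apply: lin2.
have e'i : e' i = 0 by rewrite /e' gi mulr0 addr0 /al mulNr divfK ?gt_eqF // addrN.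
have e'k : e' k = 0 by rewrite /e' dk mulr0 addr0 /be mulNr divfK ?gt_eqF // addrN.
have := Zlem hs he' ik e'i e'k m; rewrite /e' em add0r.
have dm : 0 < d m by apply: dp.
have gm : 0 < g m by apply: gp.
have alp : 0 < al by rewrite divr_gt0.
have bep : 0 < be by rewrite divr_gt0.
move=> h; have : 0 < al * d m + be * g m by rewrite addr_gt0 // mulr_gt0.
rewrite !mulNr in h; lra.
Qed.

Lemma pair_sign (R : realFieldType) (n : nat) (v : 'I_n.+2 -> 'rV[R]_n) (i k : 'I_n.+2) :
  hereditarily_spanning v -> (i < k)%N -> posi v i -> posi v k ->
  (-1) ^+ i * Num.sg (cr (fun j => v (lift i j)) ord0) +
  (-1) ^+ k * Num.sg (cr (fun j => v (lift k j)) ord0) = 0.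
Proof.
move=> hs ik hpi hpk.
have ik' : i != k by rewrite neq_ltn ik.
have [k' hk _] := unlift_some ik'.
have ki : k != i by rewrite eq_sym.
have [i' hi _] := unlift_some ki.
rewrite -(posi_sign hs hpi k') -(posi_sign hs hpk i').
have e1 : (k : nat) = k'.+1.
  have := congr1 val hk; rewrite /= /bump => h.
  have := congr1 val hi; rewrite /= /bump => h'. lia.
have e2 : (i' : nat) = i.
  have := congr1 val hk; rewrite /= /bump => h.
  have := congr1 val hi; rewrite /= /bump => h'. lia.
have hm : mat (fun r => v (lift i (lift k' r))) = mat (fun r => v (lift k (lift i' r))).
  apply/matrixP => a b; rewrite !mxE; congr (v _ 0 b); apply: val_inj.
  have := congr1 val hk; have := congr1 val hi; rewrite /= /bump => h' h. lia.
rewrite /cr hm !sgrM !sgrX sgrN1 e1 e2 exprS.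
ring.
Qed.

Unset Implicit Arguments.
Set Strict Implicit.

Theorem proposition8p1 (R : realFieldType) (n : nat) (v : 'I_n.+2 -> 'rV[R]_n) :
  ~~ odd n -> hereditarily_spanning v -> dS v = 0.
Proof.
move=> _ hs; rewrite /dS.
case: (classic (exists i, posi v i)) => [[i hpi]|hno]; last first.
  apply: big1 => i _; rewrite Sgn_npos ?mulr0 // => hp; apply: hno; by exists i.
have [k ki hpk] := partner hs hpi.
have [a [b [ab hpa hpb]]] : exists a b : 'I_n.+2, [/\ (a < b)%N, posi v a & posi v b].
  case: (ltngtP i k) => h.
  - by exists i, k.
  - by exists k, i.
  - by move: ki; rewrite (val_inj h) eqxx.
have ba : b != a by rewrite neq_ltn ab orbT.
rewrite (bigD1 a) // (bigD1 b) //= big1 ?addr0.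
  by rewrite !Sgn_pos // pair_sign.
move=> m /andP [mb ma]; rewrite Sgn_npos ?mulr0 // => hpm.
have ab' : a != b by rewrite eq_sym.
by case: (uniq3 hs hpa hpb ab' hpm) => h; move: h ma mb => ->; rewrite eqxx.
Qed.
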